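(* In the setting of the context, $N$ is isomorphic to the permutation module $k[U_3/H_2]$, and its socle is spanned by $d_1^2=x^2$. Also, $K$ is isomorphic to the permutation module $k[U_3/H_1]$, and its socle is spanned by $d_2=y^2+xy$.
   Context: Let $k=\mathbb{F}_2$ and let $U_3\cong D_8$ be the group of upper unitriangular $3\times 3$ matrices over $\mathbb{F}_2$. The group $U_3$ acts on the polynomial ring $k[x,y,z]$ by graded algebra automorphisms. Its action on the degree-one part $M=\langle x,y,z\rangle$ is the natural module, and it preserves the flag $\langle x\rangle\subset\langle x,y\rangle\subset\langle x,y,z\rangle$. Let $b,c,d\in U_3$ be the elements defined as follows: - $b$ sends $y\mapsto y+x$ and fixes $x,z$; - $c$ sends $z\mapsto z+x$ and fixes $x,y$; - $d$ sends $z\mapsto z+y$ and fixes $x,y$. Let $H_1=\langle b,c\rangle$ and $H_2=\langle d\rangle$. Put $d_1=x$ and $d_2=y^2+xy$. Let $N$ be the $kU_3$-submodule of $k[x,y,z]$ generated by $\phi=z^2+yz$, and let $K$ be the $kU_3$-submodule generated by $\theta=z^2+xz$. *)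

(* Defs.v *)
From HB Require Import structures.
From mathcomp Require Import all_boot all_order all_algebra all_fingroup.
From mathcomp Require Import mpoly.
Set Implicit Arguments. Unset Strict Implicit. Unset Printing Implicit Defensive.
Import GRing.Theory.
Local Open Scope ring_scope.

Notation F2 := 'F_2.
Notation Poly3 := {mpoly F2[3]}.
Definition xx : Poly3 := 'X_0.
Definition yy : Poly3 := 'X_1.
Definition zz : Poly3 := 'X_2.

(* The ambient finite group: GL_3(F_2). A matrix g acts on M = <x,y,z> with
   column convention: the j-th variable is sent to \sum_i g i j X_i. *)
Notation GL3 := {'GL_3[F2]}.

Definition upper_unitriangular (M : 'M[F2]_3) : bool :=
  [forall i : 'I_3, M i i == 1] && [forall i : 'I_3, forall j : 'I_3, (j < i)%N ==> (M i j == 0)].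

Definition U3 : {set GL3} := [set g : GL3 | upper_unitriangular (GLval g)].

Lemma unit_1_delta (i j : 'I_3) : (i < j)%N -> (1%:M + delta_mx i j : 'M[F2]_3) \in unitmx.
Proof.
move=> lt_ij; rewrite unitmxE -det_tr det_trig.
  rewrite big1 ?unitr1 // => k _.
  rewrite !mxE eqxx /=.
  have -> : (k == i) && (k == j) = false.
    by apply/negbTE/negP => /andP[/eqP ki /eqP kj]; move: lt_ij; rewrite -ki -kj ltnn.
  by rewrite addr0.
apply/is_trig_mxP => r s lt_rs; rewrite !mxE.
have -> : (s == r) = false by apply/negbTE; rewrite neq_ltn lt_rs orbT.
have -> : (s == i) && (r == j) = false.
  by apply/negbTE/negP => /andP[/eqP esi /eqP erj]; by move: lt_ij; rewrite -esi -erj ltnNge (ltnW lt_rs).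
by rewrite addr0.
Qed.

Definition mkGL (i j : 'I_3) (h : (i < j)%N) : GL3 := FinRing.unit _ (unit_1_delta h).

(* b : y |-> y + x ; c : z |-> z + x ; d : z |-> z + y *)
Definition b : GL3 := @mkGL 0 1 erefl.
Definition c : GL3 := @mkGL 0 2 erefl.
Definition d : GL3 := @mkGL 1 2 erefl.

Definition H1 : {group GL3} := <<[set b; c]>>%G.
Definition H2 : {group GL3} := <[d]>%G.

Definition polyact (g : GL3) (p : Poly3) : Poly3 :=
  comp_mpoly [tuple \sum_(i < 3) (GLval g i j) *: ('X_i : Poly3) | j < 3] p.

Definition d1 : Poly3 := xx.
Definition d2 : Poly3 := yy ^+ 2 + xx * yy.
Definition phi : Poly3 := zz ^+ 2 + yy * zz.
Definition theta : Poly3 := zz ^+ 2 + xx * zz.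

Definition gen_submod (p : Poly3) : Poly3 -> Prop :=
  fun q => exists cf : {ffun GL3 -> F2}, q = \sum_(g in U3) cf g *: polyact g p.

Definition N : Poly3 -> Prop := gen_submod phi.
Definition K : Poly3 -> Prop := gen_submod theta.

(* The permutation module k[U_3/H]: formal F_2-linear combinations of the left
   cosets gH (g in U_3), i.e. functions on the set of left cosets, with
   g . (delta_{xH}) = delta_{gxH}. *)
Notation PermV := {ffun {set GL3} -> F2^o}.
Definition perm_mod (H : {set GL3}) : PermV -> Prop :=
  fun f => forall C, C \notin lcosets H U3 -> f C = 0.
Definition pact (g : GL3) (f : PermV) : PermV := [ffun C => f (g^-1 *: C)%g].

Section Modules.
Variables (G : {set GL3}) (V : lmodType F2) (actV : GL3 -> V -> V).

Definition is_submod (A S : V -> Prop) : Prop :=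
  [/\ forall v, S v -> A v, S 0,
      forall u v, S u -> S v -> S (u + v),
      forall (a : F2) v, S v -> S (a *: v) &
      forall g v, g \in G -> S v -> S (actV g v)].

Definition is_simple_submod (A S : V -> Prop) : Prop :=
  [/\ is_submod A S, (exists2 v, S v & v != 0) &
      forall T, is_submod S T -> (forall v, T v -> v = 0) \/ (forall v, S v -> T v)].

(* socle = sum of all simple submodules = the smallest submodule containing
   every simple submodule *)
Definition socle (A : V -> Prop) : V -> Prop :=
  fun v => forall T, is_submod A T ->
    (forall S, is_simple_submod A S -> forall w, S w -> T w) -> T v.
End Modules.

Definition kG_iso (G : {set GL3}) (V W : lmodType F2)
  (actV : GL3 -> V -> V) (actW : GL3 -> W -> W) (A : V -> Prop) (B : W -> Prop) : Prop :=
  exists f : V -> W,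
    [/\ forall u v, A u -> A v -> f (u + v) = f u + f v,
        forall (a : F2) v, A v -> f (a *: v) = a *: f v,
        forall u v, A u -> A v -> f u = f v -> u = v,
        (forall v, A v -> B (f v)) /\ (forall w, B w -> exists2 v, A v & f v = w) &
        forall g v, g \in G -> A v -> f (actV g v) = actW g (f v)].

(* Main.v *)
Require Import Defs.
From HB Require Import structures.
From mathcomp Require Import all_boot all_order all_algebra all_fingroup.
From mathcomp Require Import mpoly.
From mathcomp Require Import ring.
From Stdlib Require Import Classical.
Import GRing.Theory.
Local Open Scope ring_scope.

Lemma F2_cases (a : F2) : a = 0 \/ a = 1.
Proof. case: a => [[|[|//]]] i; [left|right]; exact/val_inj. Qed.

Ltac f2bash := repeat match goal with a : F2 |- _ => case: (F2_cases a) => ?; subst a end.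

Lemma ord3 (i : 'I_3) : [\/ i = 0, i = 1 | i = 2].
Proof. by case: i => [[|[|[|//]]] i]; [constructor 1|constructor 2|constructor 3]; apply/val_inj. Qed.

Ltac ord3bash i := case: (ord3 i) => ->.

Definition mkUm (a b c : F2) : 'M[F2]_3 :=
  \matrix_(i < 3, j < 3)
    if i == j then 1 else
    if (i == 0) && (j == 1) then a else
    if (i == 0) && (j == 2 :> nat) then b else
    if (i == 1 :> nat) && (j == 2 :> nat) then c else 0.

Lemma mkUm_mul a b c a' b' c' :
  mkUm a b c *m mkUm a' b' c' = mkUm (a + a') (b + b' + a * c') (c + c').
Proof.
apply/matrixP => i j; rewrite !mxE !big_ord_recl big_ord0 !mxE.
case: i => [[|[|[|//]]] i]; case: j => [[|[|[|//]]] j] /=; ring.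
Qed.

Lemma mkUm_unit a b c : mkUm a b c \in unitmx.
Proof.
have := mkUm_mul a b c a (b + a * c) c.
have -> : mkUm (a + a) (b + (b + a * c) + a * c) (c + c) = 1%:M.
  apply/matrixP => i j; rewrite !mxE.
  case: i => [[|[|[|//]]] i]; case: j => [[|[|[|//]]] j] /=;
  by f2bash; apply/eqP.
by case/mulmx1_unit.
Qed.

Definition mkU a b c : GL3 := FinRing.unit _ (mkUm_unit a b c).

Lemma mkU_mul a b c a' b' c' :
  (mkU a b c * mkU a' b' c')%g = mkU (a + a') (b + b' + a * c') (c + c').
Proof. apply/val_inj; exact: mkUm_mul. Qed.

Lemma mkU_U3 a b c : mkU a b c \in U3.
Proof.
rewrite inE /upper_unitriangular /=; apply/andP; split; apply/forallP => i.
  by rewrite mxE eqxx.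
apply/forallP => j; apply/implyP; rewrite mxE.
by ord3bash i; ord3bash j; rewrite /= ?addr0 ?add0r.
Qed.

Lemma U3_mkU g : g \in U3 -> g = mkU (GLval g 0 1) (GLval g 0 2) (GLval g 1 2).
Proof.
rewrite inE /upper_unitriangular => /andP[/forallP D /forallP L].
apply/val_inj/matrixP => i j; rewrite /= mxE.
have L' := fun i j => implyP (forallP (L i) j).
ord3bash i; ord3bash j => /=; try (by apply/eqP/D); try (by apply/eqP/L').
all: done.
Qed.

Lemma mkU1 : mkU 0 0 0 = 1%g.
Proof.
apply/val_inj/matrixP => i j; rewrite /= !mxE.
by case: i => [[|[|[|//]]] i]; case: j => [[|[|[|//]]] j].
Qed.

Lemma mkUV a b c : ((mkU a b c)^-1)%g = mkU a (b + a * c) c.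
Proof.
apply/eqP; rewrite eq_invg_mul mkU_mul -mkU1; apply/eqP; congr mkU; by f2bash; apply/eqP.
Qed.

Lemma mkU_inj a b c a' b' c' : mkU a b c = mkU a' b' c' -> [/\ a = a', b = b' & c = c'].
Proof.
move=> /(congr1 (@GLval _ _)) /= /matrixP E.
by move: (E 0 1) (E 0 2) (E 1 2); rewrite !mxE /=.
Qed.

Lemma U3M g h : g \in U3 -> h \in U3 -> (g * h)%g \in U3.
Proof. by move=> /U3_mkU -> /U3_mkU ->; rewrite mkU_mul mkU_U3. Qed.

Lemma U3V g : g \in U3 -> (g^-1)%g \in U3.
Proof. by move=> /U3_mkU ->; rewrite mkUV mkU_U3. Qed.

Lemma bE : b = mkU 1 0 0.
Proof.
apply/val_inj/matrixP => i j; rewrite /= !mxE.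
by ord3bash i; ord3bash j; rewrite /= ?addr0 ?add0r.
Qed.
Lemma cE : c = mkU 0 1 0.
Proof.
apply/val_inj/matrixP => i j; rewrite /= !mxE.
by ord3bash i; ord3bash j; rewrite /= ?addr0 ?add0r.
Qed.
Lemma dE : d = mkU 0 0 1.
Proof.
apply/val_inj/matrixP => i j; rewrite /= !mxE.
by ord3bash i; ord3bash j; rewrite /= ?addr0 ?add0r.
Qed.

Lemma polyactD g : {morph polyact g : u v / u + v}.
Proof. by move=> u v; rewrite /polyact rmorphD. Qed.
Lemma polyactM g : {morph polyact g : u v / u * v}.
Proof. by move=> u v; rewrite /polyact rmorphM. Qed.
Lemma polyactZ g (a : F2) u : polyact g (a *: u) = a *: polyact g u.
Proof. by rewrite /polyact comp_mpolyZ. Qed.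
Lemma polyact0 g : polyact g 0 = 0.
Proof. by rewrite /polyact raddf0. Qed.
Lemma polyact_sum g (I : finType) (P : pred I) (F : I -> Poly3) :
  polyact g (\sum_(i | P i) F i) = \sum_(i | P i) polyact g (F i).
Proof. by rewrite /polyact raddf_sum. Qed.

Lemma polyactX g (j : 'I_3) : polyact g 'X_j = \sum_i GLval g i j *: 'X_i.
Proof. by rewrite /polyact comp_mpolyXU -tnth_nth tnth_mktuple. Qed.

Lemma actx a b c : polyact (mkU a b c) xx = xx.
Proof.
rewrite /xx polyactX !big_ord_recl big_ord0 /= !mxE /=.
by rewrite scale1r !scale0r !addr0.
Qed.
Lemma acty a b c : polyact (mkU a b c) yy = a *: xx + yy.
Proof.
rewrite /xx /yy polyactX !big_ord_recl big_ord0 /= !mxE /=.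
by rewrite scale1r !scale0r !addr0.
Qed.
Lemma actz a b c : polyact (mkU a b c) zz = b *: xx + c *: yy + zz.
Proof.
rewrite /xx /yy /zz polyactX !big_ord_recl big_ord0 /= !mxE /=.
by rewrite scale1r addr0 addrA.
Qed.

Lemma ring_mod (p q j : Poly3) : p = q + j -> j = 0 -> p = q.
Proof. by move=> -> ->; rewrite addr0. Qed.

Lemma two0 : (2%:R : Poly3) = 0.
Proof. have E : (2%:R : F2) = 0 by apply/eqP. by rewrite -mpolyC_nat E mpolyC0. Qed.

Lemma idemC (a : F2) : (a%:MP : Poly3) ^+ 2 = a%:MP.
Proof. by rewrite expr2 -mpolyCM; f2bash; rewrite ?mul0r ?mul1r. Qed.

Definition combN (a1 a2 a3 a4 : F2) : Poly3 :=
  a1 *: xx ^+ 2 + a2 *: (xx * yy) + a3 *: (xx * zz) + a4 *: phi.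

Lemma actN a b c a1 a2 a3 a4 :
  polyact (mkU a b c) (combN a1 a2 a3 a4) =
  combN (a1 + a * a2 + b * a3 + a4 * (b * (1 + a))) (a2 + c * a3 + a4 * (b + a * c))
        (a3 + a4 * a) a4.
Proof.
rewrite /combN /phi !expr2 !polyactD !polyactZ !polyactM actx acty actz.
rewrite polyactD !polyactM acty actz -!mul_mpolyC.
apply: (@ring_mod _ _ (a4%:MP * ((b%:MP ^+ 2 - b%:MP) * xx ^+ 2 + (c%:MP ^+ 2 - c%:MP) * yy ^+ 2
   + 2%:R * (b%:MP * c%:MP * xx * yy + b%:MP * xx * zz + c%:MP * yy * zz + c%:MP * yy ^+ 2)))).
  ring.
by rewrite !idemC !subrr two0 !mul0r !addr0 mulr0.
Qed.

Definition combK (a1 a2 : F2) : Poly3 := a1 *: d2 + a2 *: theta.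

Lemma actK a b c a1 a2 :
  polyact (mkU a b c) (combK a1 a2) = combK (a1 + c * a2) a2.
Proof.
rewrite /combK /d2 /theta !expr2 ?polyactD ?polyactZ ?polyactM ?actx ?acty ?actz.
rewrite ?polyactD ?polyactM ?acty ?actz ?actx ?polyactD ?polyactM ?acty ?actz ?actx -!mul_mpolyC.
apply: (@ring_mod _ _ (a1%:MP * ((a%:MP ^+ 2 - a%:MP) * xx ^+ 2 + 2%:R * (a%:MP * xx * yy + a%:MP * xx ^+ 2))
   + a2%:MP * ((b%:MP ^+ 2 - b%:MP) * xx ^+ 2 + (c%:MP ^+ 2 - c%:MP) * yy ^+ 2
   + 2%:R * (b%:MP * c%:MP * xx * yy + b%:MP * xx * zz + c%:MP * yy * zz + b%:MP * xx ^+ 2)))).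
  ring.
by rewrite !idemC !subrr two0 !mul0r !addr0 !mulr0 addr0.
Qed.

Lemma A0 p0 : gen_submod p0 0.
Proof. by exists 0; rewrite big1 // => g _; rewrite ffunE scale0r. Qed.

Lemma AD p0 u v : gen_submod p0 u -> gen_submod p0 v -> gen_submod p0 (u + v).
Proof.
move=> [cu ->] [cv ->]; exists (cu + cv); rewrite -big_split /=.
by apply: eq_bigr => g _; rewrite ffunE scalerDl.
Qed.

Lemma AZ p0 (a : F2) v : gen_submod p0 v -> gen_submod p0 (a *: v).
Proof.
move=> [cv ->]; exists [ffun g => a * cv g]; rewrite scaler_sumr.
by apply: eq_bigr => g _; rewrite ffunE scalerA.
Qed.

Lemma Aact p0 h : h \in U3 -> gen_submod p0 (polyact h p0).
Proof.
move=> hU; exists [ffun g => (g == h)%:R]; rewrite (bigD1 h) //= big1 ?addr0.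
  by rewrite ffunE eqxx scale1r.
by move=> g /andP[_ /negbTE gh]; rewrite ffunE gh scale0r.
Qed.

Lemma ffD (aT : finType) (f g : {ffun aT -> F2^o}) x : (f + g) x = f x + g x.
Proof. by rewrite ffunE. Qed.
Lemma ffZ (aT : finType) (a : F2) (f : {ffun aT -> F2^o}) x : (a *: f) x = a *: f x.
Proof. by rewrite ffunE. Qed.
Lemma ff0 (aT : finType) x : (0 : {ffun aT -> F2^o}) x = 0.
Proof. by rewrite ffunE. Qed.

Definition delta_def (X : {set GL3}) : PermV := [ffun C => ((C == X)%:R : F2^o)].
Fact delta_key : unit. Proof. exact: tt. Qed.
Definition delta := locked_with delta_key delta_def.

Definition fmap_def (H : {set GL3}) (lam : Poly3 -> F2) (v : Poly3) : PermV :=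
  [ffun C => if C \in lcosets H U3 then (lam (polyact (repr C)^-1 v) : F2^o) else 0].
Fact fmap_key : unit. Proof. exact: tt. Qed.
Definition fmap := locked_with fmap_key fmap_def.

Lemma fmapE H lam v C : fmap H lam v C =
  if C \in lcosets H U3 then (lam (polyact (repr C)^-1 v) : F2^o) else 0.
Proof. rewrite [fmap]unlock; exact: ffunE. Qed.
Lemma deltaE X C : delta X C = (C == X)%:R.
Proof. rewrite [delta]unlock; exact: ffunE. Qed.
Lemma pactE g f C : pact g f C = f (g^-1 *: C)%g.
Proof. exact: ffunE. Qed.

Lemma repr_coset (H : {group GL3}) C : (forall k, k \in H -> k \in U3) ->
  C \in lcosets H U3 -> repr C \in U3 /\ (repr C *: H)%g = C.
Proof.
move=> HU /imsetP[x xU ->]; rewrite lcosetE.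
have rx : repr (x *: H)%g \in (x *: H)%g := mem_repr _ (lcoset_refl _ _).
split; last exact/lcoset_eqP.
by case/lcosetP: rx => k kH ->; exact: U3M xU (HU k kH).
Qed.
Arguments repr_coset {H C}.

Lemma iso_gen (p0 : Poly3) (H : {group GL3}) (lam : Poly3 -> F2)
 (lamD : forall u v, lam (u + v) = lam u + lam v)
 (lamZ : forall a v, lam (a *: v) = a * lam v)
 (HU : forall k, k \in H -> k \in U3)
 (stab : forall k, k \in H -> polyact k p0 = p0)
 (law : forall g h, g \in U3 -> h \in U3 -> polyact g (polyact h p0) = polyact (g * h)%g p0)
 (lamH : forall u, u \in U3 -> lam (polyact u p0) = (u \in H)%:R) :
 kG_iso U3 polyact pact (gen_submod p0) (perm_mod H).
Proof.
have fD u v : fmap H lam (u + v) = fmap H lam u + fmap H lam v.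
  apply/ffunP => C; rewrite ffD !fmapE; case: (C \in lcosets H U3); last by rewrite addr0.
  by rewrite polyactD lamD.
have fZ (a : F2) v : fmap H lam (a *: v) = a *: fmap H lam v.
  apply/ffunP => C; rewrite ffZ !fmapE; case: (C \in lcosets H U3); last by rewrite scaler0.
  by rewrite polyactZ lamZ.
have f0 : fmap H lam 0 = 0 by rewrite -(scale0r 0) fZ scale0r.
have fsum (I : finType) (P : pred I) (F : I -> Poly3) :
    fmap H lam (\sum_(i | P i) F i) = \sum_(i | P i) fmap H lam (F i).
  exact: (big_morph _ fD f0).
have KF h : h \in U3 -> fmap H lam (polyact h p0) = delta (h *: H)%g.
  move=> hU; apply/ffunP => C; rewrite fmapE deltaE; case: (boolP (C \in lcosets H U3)) => CL.
    have [rU rC] := repr_coset HU CL.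
    rewrite law ?U3V // lamH ?U3M ?U3V //; congr ((nat_of_bool _)%:R).
    rewrite -mem_lcoset; case: (boolP (C == (h *: H)%g)) => [/eqP E|NE].
      by rewrite rC E lcoset_refl.
    apply/negbTE; apply: contra NE => hC; rewrite -rC; apply/eqP.
    by rewrite (lcoset_eqP hC).
  case: eqP => // E; move: CL; rewrite E /lcosets -lcosetE imset_f //.
have fA cf : fmap H lam (\sum_(g in U3) cf g *: polyact g p0) =
    \sum_(g in U3) cf g *: delta (g *: H)%g.
  by rewrite fsum; apply: eq_bigr => g gU; rewrite fZ KF.
have kerA w : gen_submod p0 w -> fmap H lam w = 0 -> w = 0.
  case=> cf ->; rewrite fA => /ffunP E.
  rewrite (partition_big (fun g => g *: H)%g predT) //= big1 // => C _.
  have S0 : \sum_(g in U3 | (g *: H)%g == C) cf g = 0.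
    have EC := E C; rewrite sum_ffunE ff0 in EC; rewrite -[in RHS]EC big_mkcondr /=.
    apply: eq_bigr => g _; rewrite ffZ deltaE /= eq_sym.
    by case: eqP => _ /=; [exact: (esym (mulr1 _)) | exact: (esym (mulr0 _))].
  rewrite (eq_bigr (fun g => cf g *: polyact (repr C) p0)) ?S0.
    by rewrite -scaler_suml S0 scale0r.
  move=> g /andP[gU /eqP gC].
  have : repr C \in C by rewrite -gC; exact: mem_repr _ (lcoset_refl _ _).
  rewrite -gC => /lcosetP[k kH ->].
  by rewrite -(law _ _ gU (HU _ kH)) (stab _ kH).
exists (fmap H lam); split.
- by move=> u v _ _; apply: fD.
- by move=> a v _; apply: fZ.
- move=> u v Au Av Euv; apply/eqP; rewrite -subr_eq0; apply/eqP/kerA.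
    by rewrite -scaleN1r; apply: AD => //; apply: AZ.
  by rewrite -scaleN1r fD fZ Euv scaleN1r subrr.
- split.
    by move=> v _ C CL; rewrite fmapE (negbTE CL).
  move=> w wP.
  exists (\sum_(C in lcosets H U3) w C *: polyact (repr C) p0).
    apply: big_ind => //; [exact: A0 | exact: AD | move=> C CL; apply: AZ; apply: Aact].
    by case: (repr_coset HU CL).
  rewrite fsum (eq_bigr (fun C => w C *: delta C)); last first.
    by move=> C CL; have [rU rC] := repr_coset HU CL; rewrite fZ KF // rC.
  apply/ffunP => C'; rewrite sum_ffunE.
  case: (boolP (C' \in lcosets H U3)) => HC.
    rewrite (bigD1 C') // big1 ?addr0; first by rewrite ffZ deltaE eqxx; exact: (etrans (addr0 _) (mulr1 _)).
    by move=> C /andP[_ /negbTE nC]; rewrite ffZ deltaE eq_sym nC; exact: mulr0.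
  rewrite wP // big1 // => C CL; rewrite ffZ deltaE.
  by case: eqP => [E|_]; [move: HC; rewrite E CL | exact: mulr0].
- move=> g v gU [cf ->].
  have L : fmap H lam (polyact g (\sum_(h in U3) cf h *: polyact h p0)) =
      \sum_(h in U3) cf h *: delta ((g * h) *: H)%g.
    rewrite polyact_sum fsum; apply: eq_bigr => h hU.
    by rewrite polyactZ (law _ _ gU hU) fZ (KF _ (U3M _ _ gU hU)).
  rewrite L (fA cf); apply/ffunP => C; rewrite [RHS]pactE !sum_ffunE.
  apply: eq_bigr => h hU; rewrite !ffZ !deltaE.
  have -> : (g^-1 *: C == h *: H)%g = (C == (g * h) *: H)%g.
    by rewrite lcosetM; apply/eqP/eqP => E; [rewrite -E lcosetKV | rewrite E lcosetK].
  by [].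
Qed.

Lemma U3P g : g \in U3 -> exists a b c, g = mkU a b c.
Proof. by move/U3_mkU => ->; do 3 eexists. Qed.

Lemma H2_elts k : k \in H2 -> exists c', k = mkU 0 0 c'.
Proof.
move/cycleP => [n ->]; elim: n => [|n [c' E]]; first by exists 0; rewrite expg0 mkU1.
exists (1 + c'); rewrite expgS E dE mkU_mul.
by rewrite !(add0r, mul0r, addr0).
Qed.

Lemma memH2 a b c : (mkU a b c \in H2) = (a == 0) && (b == 0).
Proof.
apply/idP/idP.
  by case/H2_elts => c' /mkU_inj [-> -> _]; rewrite eqxx.
case/andP => /eqP -> /eqP ->; case: (F2_cases c) => ->.
  by rewrite mkU1 group1.
by rewrite -dE cycle_id.
Qed.

Definition S1 : {set GL3} := [set g : GL3 | [exists x : F2 * F2, g == mkU x.1 x.2 0]].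

Lemma S1_gs : group_set S1.
Proof.
apply/group_setP; split.
  by rewrite inE; apply/existsP; exists (0, 0); rewrite /= mkU1.
move=> x y; rewrite !inE => /existsP[[a b'] /eqP ->] /existsP[[a' b''] /eqP ->].
apply/existsP; exists (a + a', b' + b'' + a * 0) => /=.
by rewrite mkU_mul addr0.
Qed.
Canonical S1_group := Group S1_gs.

Lemma memH1 a0 b0 c0 : (mkU a0 b0 c0 \in H1) = (c0 == 0).
Proof.
apply/idP/idP.
  have sub : (H1 : {set GL3}) \subset S1.
    rewrite /H1 /= gen_subG; apply/subsetP => x; rewrite !inE => /orP[] /eqP ->.
      by apply/existsP; exists (1, 0); rewrite bE.
    by apply/existsP; exists (0, 1); rewrite cE.
  move/(subsetP sub); rewrite inE => /existsP[[a' b'] /eqP /mkU_inj [_ _ ->]].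
  by [].
move/eqP ->.
case: (F2_cases a0) => ->; case: (F2_cases b0) => ->.
- by rewrite mkU1 group1.
- by rewrite -cE mem_gen // !inE eqxx orbT.
- by rewrite -bE mem_gen // !inE eqxx.
have -> : mkU 1 1 0 = (b * c)%g by rewrite bE cE mkU_mul; congr mkU; apply/eqP.
by rewrite groupM // mem_gen // !inE eqxx ?orbT.
Qed.

Lemma socle_gen p0 s : gen_submod p0 s -> s != 0 ->
  (forall g, g \in U3 -> polyact g s = s) ->
  (forall S, is_submod U3 polyact (gen_submod p0) S -> (exists2 v, S v & v != 0) -> S s) ->
  forall p, socle U3 polyact (gen_submod p0) p <-> exists a : F2, p = a *: s.
Proof.
move=> As snz sfix hit.
pose L := fun v : Poly3 => exists a : F2, v = a *: s.
have Lsub : is_submod U3 polyact (gen_submod p0) L.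
  split.
  - by move=> v [a ->]; apply: AZ.
  - by exists 0; rewrite scale0r.
  - by move=> u v [a ->] [a' ->]; exists (a + a'); rewrite scalerDl.
  - by move=> a0 v [a ->]; exists (a0 * a); rewrite scalerA.
  - by move=> g v gU [a ->]; exists a; rewrite polyactZ sfix.
have Ls : L s by exists 1; rewrite scale1r.
have Lsimple : is_simple_submod U3 polyact (gen_submod p0) L.
  split => //; first by exists s.
  move=> T [TL T0 TD TZ Tact].
  case: (classic (T s)) => Ts.
    by right => v [a ->]; apply: TZ.
  left => v Tv; have [a Ea] := TL v Tv.
  case: (F2_cases a) Ea => -> Ea; first by rewrite Ea scale0r.
  by move: Tv; rewrite Ea scale1r.
move=> p; split.
  move=> soc; apply: (soc L Lsub) => S [Ssub [v Sv vnz] Ssimp] w Sw.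
  have Ss := hit S Ssub (ex_intro2 _ _ v Sv vnz).
  case: Ssub => SA S0 SD SZ Sact.
  pose T' := fun w => L w /\ S w.
  have T'sub : is_submod U3 polyact S T'.
    split.
    - by move=> u [].
    - by split => //; exists 0; rewrite scale0r.
    - move=> u u' [[a ->] Su] [[a' ->] Su']; split; last exact: SD.
      by exists (a + a'); rewrite scalerDl.
    - move=> a0 u [[a ->] Su]; split; last exact: SZ.
      by exists (a0 * a); rewrite scalerA.
    - move=> g u gU [[a ->] Su]; split; last exact: Sact.
      by exists a; rewrite polyactZ sfix.
  case: (Ssimp T' T'sub) => [all0|allT].
    by move: snz; rewrite (all0 s (conj Ls Ss)) eqxx.
  by case: (allT w Sw).
case=> a -> T [TA T0 TD TZ Tact] Tall.
by apply: TZ; apply: (Tall L Lsimple).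
Qed.

Definition lamN (v : Poly3) : F2 := v.@[fun i : 'I_3 => if i == 1 then 0 else 1].

Lemma combND a1 a2 a3 a4 b1 b2 b3 b4 :
  combN a1 a2 a3 a4 + combN b1 b2 b3 b4 = combN (a1 + b1) (a2 + b2) (a3 + b3) (a4 + b4).
Proof. rewrite /combN -!mul_mpolyC; ring. Qed.

Lemma combNZ a a1 a2 a3 a4 :
  a *: combN a1 a2 a3 a4 = combN (a * a1) (a * a2) (a * a3) (a * a4).
Proof. rewrite /combN -!mul_mpolyC; ring. Qed.

Lemma combN0 : combN 0 0 0 0 = 0.
Proof. by rewrite /combN !scale0r !addr0. Qed.

Lemma phiE : phi = combN 0 0 0 1.
Proof. by rewrite /combN !scale0r !add0r scale1r. Qed.

Lemma x2E : d1 ^+ 2 = combN 1 0 0 0.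
Proof. by rewrite /combN !scale0r !addr0 scale1r. Qed.

Lemma actphi a b c : polyact (mkU a b c) phi = combN (b * (1 + a)) (b + a * c) a 1.
Proof. rewrite phiE actN; congr combN; f2bash; by apply/eqP. Qed.

Lemma lamN_comb a1 a2 a3 a4 : lamN (combN a1 a2 a3 a4) = a1 + a3 + a4.
Proof.
rewrite /lamN /combN /phi /xx /yy /zz !expr2 !mevalD !mevalZ !mevalM ?mevalD ?mevalM !mevalXU /=.
by f2bash; apply/eqP.
Qed.

Lemma N_comb v : N v -> exists a1 a2 a3 a4, v = combN a1 a2 a3 a4.
Proof.
case=> cf ->; apply: (big_ind (fun v => exists a1 a2 a3 a4, v = combN a1 a2 a3 a4)).
- by exists 0, 0, 0, 0; rewrite combN0.
- move=> u w [a1 [a2 [a3 [a4 ->]]]] [b1 [b2 [b3 [b4 ->]]]].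
  by rewrite combND; do 4 eexists.
- move=> g /U3P [a [b [c ->]]].
  by rewrite actphi combNZ; do 4 eexists.
Qed.

Lemma isoN : kG_iso U3 polyact pact N (perm_mod H2).
Proof.
apply: (@iso_gen phi H2 lamN).
- by move=> u v; rewrite /lamN mevalD.
- by move=> a v; rewrite /lamN mevalZ.
- by move=> k /H2_elts [c' ->]; exact: mkU_U3.
- move=> k /H2_elts [c' ->]; rewrite actphi phiE; congr combN; f2bash; by apply/eqP.
- move=> g h /U3P [a [b [c ->]]] /U3P [a' [b' [c' ->]]].
  rewrite actphi actN mkU_mul actphi; congr combN; f2bash; by apply/eqP.
- move=> u /U3P [a [b [c ->]]].
  by rewrite actphi lamN_comb memH2; f2bash; apply/eqP.
Qed.


Lemma stepN S (Ssub : is_submod U3 polyact N S) g a1 a2 a3 a4 : g \in U3 ->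
  S (combN a1 a2 a3 a4) -> S (combN a1 a2 a3 a4 + polyact g (combN a1 a2 a3 a4)).
Proof. by case: Ssub => _ _ SD _ Sact gU Sv; apply: SD => //; apply: Sact. Qed.
Arguments stepN {S} Ssub {g a1 a2 a3 a4}.

Lemma combS S a1 a2 a3 a4 b1 b2 b3 b4 : S (combN a1 a2 a3 a4) ->
  [&& a1 == b1, a2 == b2, a3 == b3 & a4 == b4] -> S (combN b1 b2 b3 b4).
Proof. by move=> Sv /and4P[/eqP <- /eqP <- /eqP <- /eqP <-]. Qed.
Arguments combS {S a1 a2 a3 a4 b1 b2 b3 b4}.

Lemma stepB S (Ssub : is_submod U3 polyact N S) a1 a2 a3 a4 :
  S (combN a1 a2 a3 a4) -> S (combN a2 0 a4 0).
Proof.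
move=> Sv; have := stepN Ssub (mkU_U3 1 0 0) Sv.
rewrite actN combND => /combS; apply; by f2bash.
Qed.
Arguments stepB {S} Ssub {a1 a2 a3 a4}.

Lemma stepC S (Ssub : is_submod U3 polyact N S) a1 a2 a3 a4 :
  S (combN a1 a2 a3 a4) -> S (combN (a3 + a4) a4 0 0).
Proof.
move=> Sv; have := stepN Ssub (mkU_U3 0 1 0) Sv.
rewrite actN combND => /combS; apply; by f2bash.
Qed.
Arguments stepC {S} Ssub {a1 a2 a3 a4}.

Lemma hitN S : is_submod U3 polyact N S -> (exists2 v, S v & v != 0) -> S (d1 ^+ 2).
Proof.
move=> Ssub [v Sv vnz].
have [a1 [a2 [a3 [a4 Ev]]]] : exists a1 a2 a3 a4, v = combN a1 a2 a3 a4.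
  by apply: N_comb; case: Ssub => SA _ _ _ _; apply: SA.
subst v; rewrite x2E.
move: vnz; f2bash; rewrite ?combN0 ?eqxx // => _;
first [ by apply: (combS Sv)
      | by apply: (combS (stepB Ssub Sv))
      | by apply: (combS (stepC Ssub Sv))
      | by apply: (combS (stepC Ssub (stepB Ssub Sv))) ].
Qed.

Lemma socN p : socle U3 polyact N p <-> exists a : F2, p = a *: (d1 ^+ 2).
Proof.
apply: (@socle_gen phi (d1 ^+ 2)).
- have E : d1 ^+ 2 = polyact (mkU 0 0 0) phi + polyact (mkU 1 0 0) phi
                    + polyact (mkU 0 1 0) phi + polyact (mkU 1 1 0) phi.
    rewrite !actphi !combND x2E; congr combN; by apply/eqP.
  rewrite E; apply: AD; [apply: AD; [apply: AD|]|]; apply: Aact; apply: mkU_U3.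
- apply/eqP => E; have := congr1 lamN E.
  by rewrite x2E lamN_comb /lamN meval0 => /eqP.
- by move=> g /U3P [a [b [c ->]]]; rewrite x2E actN; congr combN; f2bash; apply/eqP.
- exact: hitN.
Qed.

Lemma H1_elts k : k \in H1 -> exists a b', k = mkU a b' 0.
Proof.
have sub : (H1 : {set GL3}) \subset S1.
  rewrite /H1 /= gen_subG; apply/subsetP => x; rewrite !inE => /orP[] /eqP ->.
    by apply/existsP; exists (1, 0); rewrite bE.
  by apply/existsP; exists (0, 1); rewrite cE.
by move/(subsetP sub); rewrite inE => /existsP[[a' b'] /eqP ->]; exists a', b'.
Qed.

Definition lamK (v : Poly3) : F2 := v.@[fun i : 'I_3 => if i == 0 then 0 else 1].

Lemma combKD a1 a2 b1 b2 : combK a1 a2 + combK b1 b2 = combK (a1 + b1) (a2 + b2).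
Proof. rewrite /combK -!mul_mpolyC; ring. Qed.

Lemma combKZ a a1 a2 : a *: combK a1 a2 = combK (a * a1) (a * a2).
Proof. rewrite /combK -!mul_mpolyC; ring. Qed.

Lemma combK0 : combK 0 0 = 0.
Proof. by rewrite /combK !scale0r !addr0. Qed.

Lemma thetaE : theta = combK 0 1.
Proof. by rewrite /combK !scale0r !add0r scale1r. Qed.

Lemma d2E : d2 = combK 1 0.
Proof. by rewrite /combK !scale0r !addr0 scale1r. Qed.

Lemma actth a b c : polyact (mkU a b c) theta = combK c 1.
Proof. rewrite thetaE actK; congr combK; f2bash; by apply/eqP. Qed.

Lemma lamK_comb a1 a2 : lamK (combK a1 a2) = a1 + a2.
Proof.
rewrite /lamK /combK /theta /d2 /xx /yy /zz !expr2 !mevalD !mevalZ ?mevalM ?mevalD ?mevalM !mevalXU /=.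
by f2bash; apply/eqP.
Qed.

Lemma K_comb v : K v -> exists a1 a2, v = combK a1 a2.
Proof.
case=> cf ->; apply: (big_ind (fun v => exists a1 a2, v = combK a1 a2)).
- by exists 0, 0; rewrite combK0.
- move=> u w [a1 [a2 ->]] [b1 [b2 ->]].
  by rewrite combKD; do 2 eexists.
- move=> g /U3P [a [b [c ->]]].
  by rewrite actth combKZ; do 2 eexists.
Qed.

Lemma isoK : kG_iso U3 polyact pact K (perm_mod H1).
Proof.
apply: (@iso_gen theta H1 lamK).
- by move=> u v; rewrite /lamK mevalD.
- by move=> a v; rewrite /lamK mevalZ.
- by move=> k /H1_elts [a [b' ->]]; exact: mkU_U3.
- by move=> k /H1_elts [a [b' ->]]; rewrite actth thetaE.
- move=> g h /U3P [a [b [c ->]]] /U3P [a' [b' [c' ->]]].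
  rewrite actth actK mkU_mul actth; congr combK; f2bash; by apply/eqP.
- move=> u /U3P [a [b [c ->]]].
  by rewrite actth lamK_comb memH1; f2bash; apply/eqP.
Qed.

Lemma combKS (S : Poly3 -> Prop) a1 a2 b1 b2 : S (combK a1 a2) ->
  (a1 == b1) && (a2 == b2) -> S (combK b1 b2).
Proof. by move=> Sv /andP[/eqP <- /eqP <-]. Qed.
Arguments combKS {S a1 a2 b1 b2}.

Lemma hitK S : is_submod U3 polyact K S -> (exists2 v, S v & v != 0) -> S d2.
Proof.
move=> Ssub [v Sv vnz].
have [a1 [a2 Ev]] : exists a1 a2, v = combK a1 a2.
  by apply: K_comb; case: Ssub => SA _ _ _ _; apply: SA.
subst v; rewrite d2E.
have Sd : S (combK a1 a2 + polyact (mkU 0 0 1) (combK a1 a2)).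
  by case: Ssub => _ _ SD _ Sact; apply: SD => //; apply: Sact => //; apply: mkU_U3.
rewrite actK combKD in Sd.
move: vnz Sv Sd; f2bash; rewrite ?combK0 ?eqxx // => _ Sv Sd;
  first [ by apply: (combKS Sv) | by apply: (combKS Sd) ].
Qed.

Lemma socK p : socle U3 polyact K p <-> exists a : F2, p = a *: d2.
Proof.
apply: (@socle_gen theta d2).
- have E : d2 = polyact (mkU 0 0 0) theta + polyact (mkU 0 0 1) theta.
    rewrite !actth combKD d2E; congr combK; by apply/eqP.
  rewrite E; apply: AD; apply: Aact; apply: mkU_U3.
- apply/eqP => E; have := congr1 lamK E.
  by rewrite d2E lamK_comb /lamK meval0 => /eqP.
- by move=> g /U3P [a [b [c ->]]]; rewrite d2E actK; congr combK; f2bash; apply/eqP.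
- exact: hitK.
Qed.


Theorem lemma4p5 :
  [/\ kG_iso U3 polyact pact N (perm_mod H2),
      (forall p : Poly3, socle U3 polyact N p <-> exists a : F2, p = a *: (d1 ^+ 2)),
      kG_iso U3 polyact pact K (perm_mod H1) &
      (forall p : Poly3, socle U3 polyact K p <-> exists a : F2, p = a *: d2)].
Proof. split; [exact: isoN | exact: socN | exact: isoK | exact: socK]. Qed.
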